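(* For any integrable kernel $\kappa$ on a type space $(\mathcal S,\mu)$ we have, for $x\in\mathcal S$, $\chi(\kappa;x)=\sum_{j=0}^\infty T_\kappa^j1(x)$, $\quad\chi(\kappa)=\mu(\mathcal S)^{-1}\sum_{j=0}^\infty\int_{\mathcal S}T_\kappa^j1\,d\mu=\mu(\mathcal S)^{-1}\sum_{j=0}^\infty\langle T_\kappa^j1,1\rangle_\mu$, $\hat\chi(\kappa;x)=(1-\rho(\kappa;x))\sum_{j=0}^\infty\hat T_\kappa^j1(x)$, $\quad\hat\chi(\kappa)=\mu(\mathcal S)^{-1}\sum_{j=0}^\infty\int_{\mathcal S}\hat T_\kappa^j1\,d\hat\mu=\mu(\mathcal S)^{-1}\sum_{j=0}^\infty\langle\hat T_\kappa^j1,1\rangle_{\hat\mu}$.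
   Context: A type space is a measure space $(\mathcal S,\mu)$ with $0<\mu(\mathcal S)<\infty$; a kernel is a symmetric measurable $\kappa:\mathcal S^2\to[0,\infty)$, integrable if $\int_{\mathcal S^2}\kappa<\infty$; it is assumed that $\int\kappa(x,y)\,d\mu(y)<\infty$ for every $x$. The branching process $\mathfrak X_\kappa(x)$ starts with one particle of type $x$; each particle of type $y$ independently has children whose types form a Poisson process on $\mathcal S$ with intensity $\kappa(y,z)\,d\mu(z)$; $|\mathfrak X_\kappa(x)|\in\{1,2,\dots,\infty\}$ is the total population. $\rho(\kappa;x)=\mathbb P(|\mathfrak X_\kappa(x)|=\infty)$, $\chi(\kappa;x)=\mathbb E|\mathfrak X_\kappa(x)|$, $\hat\chi(\kappa;x)=\mathbb E(|\mathfrak X_\kappa(x)|;|\mathfrak X_\kappa(x)|<\infty)$, $\chi(\kappa)=\mu(\mathcal S)^{-1}\int\chi(\kappa;x)d\mu(x)$, $\hat\chi(\kappa)=\mu(\mathcal S)^{-1}\int\hat\chi(\kappa;x)d\mu(x)$. $T_\kappa f(x)=\int\kappa(x,y)f(y)\,d\mu(y)$ (defined in $[0,\infty]$ for $f\ge0$); $1$ is the constant function; $\langle f,g\rangle_\nu=\int fg\,d\nu$. $\hat\mu$ is the measure $d\hat\mu(x)=(1-\rho(\kappa;x))\,d\mu(x)$ and $\hat T_\kappa f=T_\kappa\big(f(1-\rho(\kappa;\cdot))\big)$, i.e. the integral operator with kernel $\kappa$ with respect to $\hat\mu$. *)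

(* Defs.v *)
From HB Require Import structures.
From mathcomp Require Import all_boot all_order all_algebra.
From mathcomp Require Import all_classical all_reals all_analysis.
Set Implicit Arguments. Unset Strict Implicit. Unset Printing Implicit Defensive.
Import Order.TTheory GRing.Theory Num.Theory.
Local Open Scope classical_set_scope.
Local Open Scope ring_scope.
Local Open Scope ereal_scope.

Section branching.
Context {d : measure_display} {T : measurableType d} {R : realType}.
Variable mu : {measure set T -> \bar R}.
Variable kappa : T -> T -> R.

Definition Tk (f : T -> \bar R) : T -> \bar R :=
  fun x => \int[mu]_y ((kappa x y)%:E * f y).

Definition wint (w f : T -> \bar R) : \bar R := \int[mu]_x (w x * f x).

Definition wip (w f g : T -> \bar R) : \bar R := \int[mu]_x (w x * (f x * g x)).

Fixpoint multint (k : nat) (G : seq T -> \bar R) : \bar R :=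
  match k with
  | 0%N => G [::]
  | k'.+1 => \int[mu]_z multint k' (fun zs => G (z :: zs))
  end.

Definition lam (y : T) : R := fine (\int[mu]_z (kappa y z)%:E).

(** Expectation of F(children of a particle of type y): the children types form
    a Poisson process with (finite) intensity kappa(y,z) dmu(z), i.e. their number
    is Poisson(lam y) and, given it equals k, they are i.i.d. with law
    kappa(y,z) dmu(z) / lam y. *)
Definition childE (y : T) (F : seq T -> \bar R) : \bar R :=
  (expR (- lam y))%:E *
  \sum_(0 <= k <oo)
     ((k`!%:R)^-1%:E * multint k (fun zs => F zs * (\prod_(z <- zs) kappa y z)%:E)).

(** Expectation of F(next generation) given the current generation ys:
    particles reproduce independently, children lists are concatenated. *)
Fixpoint offE (ys : seq T) (F : seq T -> \bar R) : \bar R :=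
  match ys with
  | [::] => F [::]
  | y :: ys' => childE y (fun c => offE ys' (fun c' => F (c ++ c')))
  end.

(** Expectation of G(Z_1,...,Z_n) for the generation process started from
    generation Z_0 = zs. *)
Fixpoint pathE (n : nat) (zs : seq T) (G : seq (seq T) -> \bar R) : \bar R :=
  match n with
  | 0%N => G [::]
  | n'.+1 => offE zs (fun z1 => pathE n' z1 (fun rest => G (z1 :: rest)))
  end.

(** Number of particles in generations 0..n of a path started from one particle. *)
Definition popsize (p : seq (seq T)) : \bar R := ((1 + sumn (map size p))%N%:R)%:E.

(** Indicator that the last generation of the path (Z_0 = [x]) is empty. *)
Definition extinct_by (x : T) (p : seq (seq T)) : bool := nilp (last [:: x] p).

(** chi(kappa;x) = E |X_kappa(x)| = lim_n E(#particles in generations 0..n). *)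
Definition chi_x (x : T) : \bar R :=
  ereal_sup (range (fun n => pathE n [:: x] popsize)).

(** rho(kappa;x) = P(|X_kappa(x)| = oo) = lim_n P(Z_n nonempty). *)
Definition rho_x (x : T) : \bar R :=
  ereal_inf (range (fun n => pathE n [:: x]
                     (fun p => if extinct_by x p then 0 else 1))).

(** hat chi(kappa;x) = E(|X|; |X| < oo) = lim_n E(|X|; Z_n empty). *)
Definition chihat_x (x : T) : \bar R :=
  ereal_sup (range (fun n => pathE n [:: x]
                     (fun p => if extinct_by x p then popsize p else 0))).

Definition chi_avg : \bar R := ((fine (mu setT))^-1)%:E * \int[mu]_x chi_x x.
Definition chihat_avg : \bar R := ((fine (mu setT))^-1)%:E * \int[mu]_x chihat_x x.

(** weight 1 - rho of the measure hat mu, and hat T_kappa f = T_kappa (f (1-rho)). *)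
Definition hatw (x : T) : \bar R := 1 - rho_x x.
Definition That (f : T -> \bar R) : T -> \bar R := Tk (fun y => f y * hatw y).

End branching.

(* Main.v *)
Require Import Defs.
From HB Require Import structures.
From mathcomp Require Import all_boot all_order all_algebra.
From mathcomp Require Import all_classical all_reals all_analysis.
From mathcomp Require Import measurable_realfun.
Import Order.TTheory GRing.Theory Num.Theory.
Import numFieldNormedType.Exports.
Local Open Scope classical_set_scope.
Local Open Scope ring_scope.
Local Open Scope ereal_scope.
From mathcomp Require Import ring lra.
Section multint.
Context d (T : measurableType d) (R : realType) (mu : {measure set T -> \bar R}).

Lemma multint_lin (f1 f2 : T -> R) (k : nat) (a b : R) :
  mu.-integrable setT (EFin \o f1) -> mu.-integrable setT (EFin \o f2) ->
  multint mu k (fun zs => (a * \prod_(z <- zs) f1 z + b * \prod_(z <- zs) f2 z)%:E)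
  = (a * (fine (\int[mu]_z (f1 z)%:E)) ^+ k + b * (fine (\int[mu]_z (f2 z)%:E)) ^+ k)%:E.
Proof.
move=> i1 i2; set J1 := fine _; set J2 := fine _.
have E1 : \int[mu]_z (f1 z)%:E = J1%:E by rewrite fineK//; exact: integrable_fin_num.
have E2 : \int[mu]_z (f2 z)%:E = J2%:E by rewrite fineK//; exact: integrable_fin_num.
elim: k a b => [|k IH] a b /=.
  by rewrite !big_nil !expr0 !mulr1.
transitivity (\int[mu]_z ((a * J1 ^+ k)%:E * (f1 z)%:E + (b * J2 ^+ k)%:E * (f2 z)%:E)).
  apply: eq_integral => z _.
  rewrite -EFinM -EFinM -EFinD.
  have -> : (a * J1 ^+ k * f1 z + b * J2 ^+ k * f2 z = (a * f1 z) * J1 ^+ k + (b * f2 z) * J2 ^+ k)%R by ring.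
  rewrite -IH; congr (multint _ _ _); apply/funext => zs.
  by rewrite !big_cons; congr (_%:E); ring.
rewrite integralD//; [|exact: integrableZl|exact: integrableZl].
rewrite integralZl// integralZl// E1 E2 -!EFinM -EFinD; congr (_%:E).
by rewrite !exprS; ring.
Qed.
End multint.
Section multint2.
Context d (T : measurableType d) (R : realType) (mu : {measure set T -> \bar R}).

Lemma multint_M2 (f : T -> R) (g : T -> \bar R) (k : nat) (c : R) (b : \bar R) :
  (forall z, 0 <= f z)%R -> measurable_fun setT f -> \int[mu]_z (f z)%:E < +oo ->
  (forall z, 0 <= g z) -> measurable_fun setT g -> (0 <= c)%R -> 0 <= b ->
  multint mu k (fun zs => c%:E * (\prod_(z <- zs) f z)%:E * (b + \sum_(z <- zs) g z))
  = c%:E * (((fine (\int[mu]_z (f z)%:E)) ^+ k)%:E * b +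
            (k%:R * (fine (\int[mu]_z (f z)%:E)) ^+ k.-1)%:E * \int[mu]_z ((f z)%:E * g z)).
Proof.
move=> f0 mf fi g0 mg.
set J := fine _; set Jg := \int[mu]_z _.
have EJ : \int[mu]_z (f z)%:E = J%:E.
  by rewrite fineK// ge0_fin_numE//; apply: integral_ge0 => z _; rewrite lee_fin.
have J0 : (0 <= J)%R by rewrite -lee_fin -EJ; apply: integral_ge0 => z _; rewrite lee_fin.
have Jg0 : 0 <= Jg by apply: integral_ge0 => z _; apply: mule_ge0; rewrite ?lee_fin.
have mfE : measurable_fun setT (fun z => (f z)%:E) by exact/measurable_EFinP.
elim: k c b => [|k IH] c b c0 b0 /=.
  by rewrite !big_nil expr0 mul0r mul0e adde0 mul1e mule1 adde0.
transitivity (\int[mu]_z ((c * f z)%:E * ((J ^+ k)%:E * (b + g z) +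
                 (k%:R * J ^+ k.-1)%:E * Jg))).
  apply: eq_integral => z _.
  rewrite -IH ?mulr_ge0 ?adde_ge0//; congr (multint _ _ _); apply/funext => zs.
  by rewrite !big_cons addeA !EFinM muleA.
transitivity (\int[mu]_z ((f z)%:E * (c%:E * ((J ^+ k)%:E * b + (k%:R * J ^+ k.-1)%:E * Jg))
     + (c * J ^+ k)%:E * ((f z)%:E * g z))).
  apply: eq_integral => z _.
  rewrite (ge0_muleDr (J ^+ k)%:E) ?g0// addeAC (ge0_muleDr (c * f z)%:E); last 2 first.
  - by apply: adde_ge0; apply: mule_ge0; rewrite ?lee_fin ?exprn_ge0 ?mulr_ge0 ?exprn_ge0.
  - by apply: mule_ge0; rewrite ?lee_fin ?exprn_ge0.
  congr (_ + _); first by rewrite [(c * f z)%:E]EFinM -muleA muleCA.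
  rewrite [(c * f z)%:E]EFinM [(c * _)%:E]EFinM -!muleA; congr (_ * _); exact: muleCA.
rewrite ge0_integralD//; last 4 first.
- move=> z _; apply: mule_ge0; rewrite ?lee_fin//.
  apply: mule_ge0; rewrite ?lee_fin//.
  by apply: adde_ge0; apply: mule_ge0; rewrite ?lee_fin ?exprn_ge0 ?mulr_ge0 ?exprn_ge0.
- by apply: emeasurable_funM => //; exact: measurable_cst.
- by move=> z _; apply: mule_ge0; rewrite ?lee_fin ?mulr_ge0 ?exprn_ge0//; apply: mule_ge0; rewrite ?lee_fin.
- by apply: emeasurable_funM; [exact: measurable_cst|exact: emeasurable_funM].
rewrite ge0_integralZr//; last 2 first.
- by move=> z _; rewrite lee_fin.
- apply: mule_ge0; rewrite ?lee_fin//.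
  by apply: adde_ge0; apply: mule_ge0; rewrite ?lee_fin ?exprn_ge0 ?mulr_ge0 ?exprn_ge0.
rewrite ge0_integralZl//; last 3 first.
- exact: emeasurable_funM.
- by move=> z _; apply: mule_ge0; rewrite ?lee_fin.
- by rewrite lee_fin mulr_ge0 ?exprn_ge0.
rewrite -/Jg EJ muleA -EFinM ge0_muleDr; last 2 first.
- by rewrite mule_ge0 ?lee_fin ?exprn_ge0.
- by rewrite mule_ge0 ?lee_fin ?mulr_ge0 ?exprn_ge0.
rewrite !muleA -!EFinM -addeA -ge0_muleDl ?lee_fin ?mulr_ge0 ?exprn_ge0//.
rewrite (ge0_muleDr c%:E); last 2 first.
- by rewrite mule_ge0 ?lee_fin ?exprn_ge0.
- by rewrite mule_ge0 ?lee_fin ?mulr_ge0 ?exprn_ge0.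
rewrite !muleA -!EFinM -EFinD; congr (_%:E * _ + _%:E * _).
  by rewrite exprS; ring.
by case: k {IH} => [|k] /=; rewrite ?exprS; ring.
Qed.
End multint2.
Lemma eseries_real (R : realType) (u : nat -> R) (l : R) :
  series u @ \oo --> l -> \sum_(0 <= k <oo) (u k)%:E = l%:E.
Proof.
move=> h; apply/cvg_lim => //.
rewrite (_ : (fun n => _) = EFin \o series u); last first.
  by apply/funext => n; rewrite /= sumEFin.
by apply: (cvg_comp _ _ h).
Qed.

Lemma exp_cvg (R : realType) (x : R) : series (exp_coeff x) @ \oo --> expR x.
Proof. exact: is_cvg_series_exp_coeff. Qed.

Lemma series_ge0 (R : realType) (r : nat -> R) n :
  (forall k, 0 <= r k)%R -> (0 <= series r n)%R.
Proof. by move=> r0; rewrite /series /=; apply: sumr_ge0 => k _. Qed.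

Lemma eseriesZr_ext (R : realType) (r : nat -> R) (l : R) (x : \bar R) :
  (forall k, 0 <= r k)%R -> 0 <= x -> series r @ \oo --> l ->
  \sum_(0 <= k <oo) ((r k)%:E * x) = l%:E * x.
Proof.
move=> r0 x0 h; case: x x0 => [x x0|_|//].
  under eq_fun do under eq_bigr do rewrite -EFinM.
  apply: eseries_real.
  have -> : series (fun k => r k * x)%R = (fun n => series r n * x)%R.
    by apply/funext => n /=; rewrite mulr_suml.
  exact: cvgMr_tmp.
have nd : nondecreasing_seq (series r).
  by apply/nondecreasing_seqP => n; rewrite /series /= big_nat_recr//= lerDl.
have lE : limn (series r) = l by apply/cvg_lim.
have cv : cvgn (series r) by apply/cvg_ex; exists l.
have rl k : (r k <= l)%R.
  rewrite -lE (le_trans _ (nondecreasing_cvgn_le nd cv k.+1))//.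
  by rewrite /series /= big_nat_recr//= lerDr; apply: sumr_ge0.
have [l0|l0] := eqVneq l 0%R.
  have rk0 k : r k = 0%R by apply/le_anti; rewrite r0 andbT -l0 rl.
  rewrite l0 mul0e; apply: lim_near_cst => //; near=> n.
  by rewrite big1// => k _; rewrite rk0 mul0e.
have lpos : (0 < l)%R.
  rewrite lt_neqAle eq_sym l0 /= -lE; apply: le_trans (nondecreasing_cvgn_le nd cv 0).
  exact: series_ge0.
have [k rk] : exists k, r k != 0%R.
  apply/not_existsP => hk.
  have : series r = cst 0%R.
    apply/funext => n; rewrite /series /= big1// => k _.
    by have := hk k; apply: contra_notP => /eqP.
  by move=> s0; move: lE; rewrite s0 lim_cst// => l0'; rewrite l0' eqxx in l0.
rewrite gt0_muley ?lte_fin//; apply: (eseries_pinfty (k := k)) => //.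
- by move=> n _; rewrite gt_eqF// (@lt_le_trans _ _ 0) ?ltNy0// mule_ge0// lee_fin.
- by rewrite gt0_muley// lte_fin lt_neqAle eq_sym rk r0.
Unshelve. all: by end_near. Qed.

Lemma shift_exp_cvg (R : realType) (x : R) :
  series (fun k => k%:R * x ^+ k.-1 / k`!%:R)%R @ \oo --> expR x.
Proof.
rewrite -cvg_shiftS /=.
have -> : (fun n => series (fun k => k%:R * x ^+ k.-1 / k`!%:R)%R n.+1) =
          series (exp_coeff x).
  apply/funext => n; rewrite /series /= big_nat_recl//= mul0r mul0r add0r.
  apply: eq_bigr => k _; rewrite /exp_coeff /= factS natrM invfM mulrA.
  by rewrite [(k.+1%:R * _)%R]mulrC mulfK ?pnatr_eq0.
exact: exp_cvg.
Qed.

Lemma sup_shift (R : realType) (u : (\bar R)^nat) :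
  nondecreasing_seq u -> ereal_sup (range (fun n => u n.+1)) = limn u.
Proof.
move=> nd; have nd' : nondecreasing_seq (fun n => u n.+1) by move=> m n mn; apply: nd.
have h := ereal_nondecreasing_cvgn nd'.
have h2 : u @ \oo --> ereal_sup (range (fun n => u n.+1)) by rewrite -cvg_shiftS.
by apply/esym/cvg_lim.
Qed.
Section proof.
Context d (T : measurableType d) (R : realType) (mu : {measure set T -> \bar R}) (kappa : T -> T -> R).
Hypothesis muT : mu setT < +oo.
Hypothesis k0 : forall x y, (0 <= kappa x y)%R.
Hypothesis mk : measurable_fun setT (fun p : T * T => kappa p.1 p.2).
Hypothesis kint : forall x, \int[mu]_y (kappa x y)%:E < +oo.

Definition muf : set T -> \bar R := mu.
HB.instance Definition _ := Measure.on muf.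
HB.instance Definition _ := @Measure_isFinite.Build d T R muf (lty_fin_num_fun muT).

Lemma mky y : measurable_fun setT (kappa y).
Proof. exact: (measurableT_comp mk (pair1_measurable y)). Qed.

Lemma Tk_meas f : measurable_fun setT f -> (forall x, 0 <= f x) ->
  measurable_fun setT (Tk mu kappa f).
Proof.
move=> mf f0.
have := @measurable_fun_fubini_tonelli_F _ _ T T R muf
  (fun p => (kappa p.1 p.2)%:E * f p.2).
apply.
- apply: emeasurable_funM; first exact/measurable_EFinP.
  exact: measurableT_comp mf measurable_snd.
- by move=> p; apply: mule_ge0; [rewrite lee_fin|exact: f0].
Qed.

Lemma lamE y : (lam mu kappa y)%:E = \int[mu]_z (kappa y z)%:E.
Proof.
rewrite /lam fineK// ge0_fin_numE ?kint//.
by apply: integral_ge0 => z _; rewrite lee_fin.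
Qed.

Lemma int_k y : mu.-integrable setT (EFin \o kappa y).
Proof.
apply/integrableP; split; first exact/measurable_EFinP/mky.
rewrite (eq_integral (fun z => (kappa y z)%:E)) ?kint// => z _.
by rewrite /= ger0_norm.
Qed.

Lemma int_kphi y (phi : T -> R) : measurable_fun setT phi ->
  (forall z, 0 <= phi z <= 1)%R ->
  mu.-integrable setT (EFin \o (fun z => kappa y z * phi z)%R).
Proof.
move=> mphi phi01; apply: (le_integrable measurableT _ _ (int_k y)).
  by apply/measurable_EFinP; apply: measurable_funM => //; exact: mky.
move=> z _ /=; case/andP: (phi01 z) => p0 p1.
rewrite lee_fin !ger0_norm ?mulr_ge0//.
by rewrite ler_piMr.
Qed.

Definition Ephi (phi : T -> R) y : R :=
  expR (fine (\int[mu]_z (kappa y z * phi z)%:E) - lam mu kappa y).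

Lemma childE_M1 y (phi : T -> R) (a b : R) : measurable_fun setT phi ->
  (forall z, 0 <= phi z <= 1)%R ->
  childE mu kappa y (fun cs => (a + b * \prod_(z <- cs) phi z)%:E) =
  (a + b * Ephi phi y)%:E.
Proof.
move=> mphi phi01; rewrite /childE.
set L := lam mu kappa y; pose I := fine (\int[mu]_z (kappa y z * phi z)%:E).
transitivity ((expR (- L))%:E * (a * expR L + b * expR I)%:E); last first.
  rewrite -EFinM /Ephi -/I -/L; congr (_%:E).
  rewrite mulrDr mulrCA -expRD addNr expR0 mulr1 mulrCA -expRD.
  by rewrite [(- L + I)%R]addrC.
congr (_ * _).
transitivity (\sum_(0 <= k <oo) (((k`!%:R)^-1 * (a * L ^+ k + b * I ^+ k))%:E)).
  congr (limn _); apply/funext => n; apply: eq_bigr => k _.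
  rewrite EFinM; congr (_ * _).
  rewrite (_ : (fun zs => _) = (fun zs => (a * \prod_(z <- zs) kappa y z +
      b * \prod_(z <- zs) (kappa y z * phi z))%:E)); last first.
    by apply/funext => zs; rewrite -EFinM big_split /=; congr (_%:E); ring.
  by rewrite multint_lin//; [exact: int_k|exact: int_kphi].
apply: eseries_real.
have -> : series (fun k => (k`!%:R)^-1 * (a * L ^+ k + b * I ^+ k))%R =
   (fun n => a * series (exp_coeff L) n + b * series (exp_coeff I) n)%R.
  apply/funext => n /=; rewrite !mulr_sumr -big_split /=.
  by apply: eq_bigr => k _; rewrite /exp_coeff /=; ring.
by apply: cvgD; apply: cvgMl_tmp; exact: exp_cvg.
Qed.

Lemma childE_M2 y (phi : T -> R) (g : T -> \bar R) (c : R) (b : \bar R) :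
  measurable_fun setT phi -> (forall z, 0 <= phi z <= 1)%R ->
  measurable_fun setT g -> (forall z, 0 <= g z) -> (0 <= c)%R -> 0 <= b ->
  childE mu kappa y (fun cs => c%:E * (\prod_(z <- cs) phi z)%:E * (b + \sum_(z <- cs) g z)) =
  c%:E * (Ephi phi y)%:E * (b + \int[mu]_z ((kappa y z * phi z)%:E * g z)).
Proof.
move=> mphi phi01 mg g0 c0 b0; rewrite /childE.
set L := lam mu kappa y.
pose I := fine (\int[mu]_z (kappa y z * phi z)%:E).
set Jg := \int[mu]_z _.
have Jg0 : 0 <= Jg.
  apply: integral_ge0 => z _; apply: mule_ge0 => //.
  by rewrite lee_fin mulr_ge0//; case/andP: (phi01 z).
have I0 : (0 <= I)%R.
  rewrite /I fine_ge0// integral_ge0// => z _.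
  by rewrite lee_fin mulr_ge0//; case/andP: (phi01 z).
have ikp := int_kphi y phi mphi phi01.
transitivity ((expR (- L))%:E * ((c * expR I)%:E * b + (c * expR I)%:E * Jg)); last first.
  rewrite -EFinM (ge0_muleDr (c * Ephi phi y)%:E)//.
  rewrite ge0_muleDr; last 2 first.
  - by rewrite mule_ge0// lee_fin mulr_ge0// expR_ge0.
  - by rewrite mule_ge0// lee_fin mulr_ge0// expR_ge0.
  rewrite !muleA -!EFinM /Ephi -/I -/L.
  have -> : (expR (- L) * (c * expR I) = c * expR (I - L))%R.
    by rewrite [(I - L)%R]addrC expRD; ring.
  by [].
congr (_ * _).
transitivity (\sum_(0 <= k <oo) ((c * exp_coeff I k)%:E * b +
     (c * (k%:R * I ^+ k.-1 / k`!%:R))%:E * Jg)).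
  congr (limn _); apply/funext => n; apply: eq_bigr => k _.
  rewrite (_ : (fun zs => _) = (fun zs => c%:E * (\prod_(z <- zs) (kappa y z * phi z))%:E *
       (b + \sum_(z <- zs) g z))); last first.
    apply/funext => zs; rewrite big_split /= EFinM.
    by rewrite muleAC -!muleA; congr (_ * _); rewrite muleCA.
  rewrite multint_M2//; last 3 first.
  - by move=> z; rewrite mulr_ge0//; case/andP: (phi01 z).
  - by apply: measurable_funM => //; exact: mky.
  - exact: integrable_lty ikp.
  rewrite -/I -/Jg muleA -EFinM ge0_muleDr; last 2 first.
  - by rewrite mule_ge0// lee_fin exprn_ge0.
  - by rewrite mule_ge0// lee_fin mulr_ge0// exprn_ge0.
  rewrite !muleA -!EFinM /exp_coeff /=.
  by congr (_%:E * _ + _%:E * _); ring.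
rewrite nneseriesD; last 2 first.
- by move=> k _ _; rewrite mule_ge0// lee_fin mulr_ge0// /exp_coeff /= divr_ge0// exprn_ge0.
- by move=> k _ _; rewrite mule_ge0// lee_fin mulr_ge0// divr_ge0// mulr_ge0// exprn_ge0.
rewrite (@eseriesZr_ext R _ (c * expR I)%R b _ b0); last 2 first.
- by move=> k; rewrite mulr_ge0// /exp_coeff /= divr_ge0// exprn_ge0.
- have -> : series (fun k => c * exp_coeff I k)%R = (fun n => c * series (exp_coeff I) n)%R.
    by apply/funext => n /=; rewrite mulr_sumr.
  by apply: cvgMl_tmp; exact: exp_cvg.
rewrite (@eseriesZr_ext R _ (c * expR I)%R Jg _ Jg0)//.
- by move=> k; rewrite mulr_ge0// divr_ge0// mulr_ge0// exprn_ge0.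
- have -> : series (fun k => c * (k%:R * I ^+ k.-1 / k`!%:R))%R =
      (fun n => c * series (fun k => k%:R * I ^+ k.-1 / k`!%:R)%R n)%R.
    by apply/funext => n /=; rewrite mulr_sumr.
  by apply: cvgMl_tmp; exact: shift_exp_cvg.
Qed.

Lemma offE_M1 zs (phi : T -> R) (a b : R) : measurable_fun setT phi ->
  (forall z, 0 <= phi z <= 1)%R ->
  offE mu kappa zs (fun cs => (a + b * \prod_(z <- cs) phi z)%:E) =
  (a + b * \prod_(y <- zs) Ephi phi y)%:E.
Proof.
move=> mphi phi01; elim: zs b => [|y ys IH] b /=; first by rewrite !big_nil.
transitivity (childE mu kappa y (fun c =>
   (a + (b * \prod_(y0 <- ys) Ephi phi y0) * \prod_(z <- c) phi z)%:E)).
  congr (childE _ _ _ _); apply/funext => c.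
  transitivity (offE mu kappa ys (fun cs => (a + (b * \prod_(z <- c) phi z) * \prod_(z <- cs) phi z)%:E)).
    by congr (offE _ _ _ _); apply/funext => cs; rewrite big_cat /= mulrA.
  by rewrite IH; congr (_%:E); ring.
by rewrite childE_M1// big_cons; congr (_%:E); ring.
Qed.

Definition Jpg (phi : T -> R) (g : T -> \bar R) y := \int[mu]_z ((kappa y z * phi z)%:E * g z).

Lemma Jpg_ge0 phi g y : (forall z, 0 <= phi z)%R -> (forall z, 0 <= g z) -> 0 <= Jpg phi g y.
Proof.
move=> p0 g0; apply: integral_ge0 => z _; apply: mule_ge0 => //.
by rewrite lee_fin mulr_ge0.
Qed.

Lemma offE_M2 zs (phi : T -> R) (g : T -> \bar R) (c : R) (b : \bar R) :
  measurable_fun setT phi -> (forall z, 0 <= phi z <= 1)%R ->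
  measurable_fun setT g -> (forall z, 0 <= g z) -> (0 <= c)%R -> 0 <= b ->
  offE mu kappa zs (fun cs => c%:E * (\prod_(z <- cs) phi z)%:E * (b + \sum_(z <- cs) g z)) =
  c%:E * (\prod_(y <- zs) Ephi phi y)%:E * (b + \sum_(y <- zs) Jpg phi g y).
Proof.
move=> mphi phi01 mg g0; have p0 z : (0 <= phi z)%R by case/andP: (phi01 z).
elim: zs c b => [|y ys IH] c b c0 b0 /=; first by rewrite !big_nil.
have sJ0 : 0 <= \sum_(y0 <- ys) Jpg phi g y0 by apply: sume_ge0 => *; exact: Jpg_ge0.
have PE0 : (0 <= \prod_(y0 <- ys) Ephi phi y0)%R.
  by apply: prodr_ge0 => *; exact: expR_ge0.
transitivity (childE mu kappa y (fun c1 =>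
   (c * \prod_(y0 <- ys) Ephi phi y0)%:E * (\prod_(z <- c1) phi z)%:E *
   ((b + \sum_(y0 <- ys) Jpg phi g y0) + \sum_(z <- c1) g z))).
  congr (childE _ _ _ _); apply/funext => c1.
  have Pc0 : (0 <= \prod_(z <- c1) phi z)%R by apply: prodr_ge0.
  have Sc0 : 0 <= \sum_(z <- c1) g z by apply: sume_ge0.
  transitivity (offE mu kappa ys (fun cs => (c * \prod_(z <- c1) phi z)%:E *
      (\prod_(z <- cs) phi z)%:E * ((b + \sum_(z <- c1) g z) + \sum_(z <- cs) g z))).
    congr (offE _ _ _ _); apply/funext => cs.
    by rewrite big_cat big_cat /= addeA EFinM EFinM muleA.
  rewrite IH ?mulr_ge0 ?adde_ge0//.
  rewrite EFinM EFinM [X in _ * X = _]addeAC; congr (_ * _); exact: muleAC.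
rewrite childE_M2 ?mulr_ge0 ?adde_ge0//.
rewrite big_cons big_cons /Jpg -[X in _ * X = _]addeA [X in _ * (_ + X) = _]addeC.
by rewrite -!EFinM; congr (_%:E * _); ring.
Qed.

Lemma Jpg_meas (phi : T -> R) (g : T -> \bar R) : measurable_fun setT phi ->
  (forall z, 0 <= phi z)%R -> measurable_fun setT g -> (forall z, 0 <= g z) ->
  measurable_fun setT (Jpg phi g).
Proof.
move=> mphi p0 mg g0.
have := @measurable_fun_fubini_tonelli_F _ _ T T R muf
  (fun p => (kappa p.1 p.2 * phi p.2)%:E * g p.2).
apply.
- apply: emeasurable_funM; last exact: measurableT_comp mg measurable_snd.
  apply/measurable_EFinP; apply: measurable_funM => //.
  exact: measurableT_comp mphi measurable_snd.
- by move=> p; apply: mule_ge0 => //; rewrite lee_fin mulr_ge0.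
Qed.

Lemma lam_meas : measurable_fun setT (lam mu kappa).
Proof.
apply: measurableT_comp => //.
have := @Jpg_meas (fun _ => 1%R) (fun _ => 1) (measurable_cst _) (fun _ => ler01)
  (measurable_cst _) (fun _ => lee01).
apply: eq_measurable_fun => y _.
by rewrite /Jpg; apply: eq_integral => z _; rewrite mulr1 mule1.
Qed.

Lemma Ephi_meas (phi : T -> R) : measurable_fun setT phi ->
  (forall z, 0 <= phi z)%R -> measurable_fun setT (Ephi phi).
Proof.
move=> mphi p0.
have H1 : measurable_fun setT (fun y => \int[mu]_z (kappa y z * phi z)%:E).
  have := @Jpg_meas phi (fun _ => 1) mphi p0 (measurable_cst _) (fun _ => lee01).
  apply: eq_measurable_fun => y _.
  by rewrite /Jpg; apply: eq_integral => z _; rewrite mule1.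
have H2 := measurableT_comp (fine_measurable measurableT) H1.
have H3 := measurable_funB H2 lam_meas.
exact (measurableT_comp (@measurable_expR R) H3).
Qed.

Lemma int_kphi_le y (phi psi : T -> R) : measurable_fun setT phi -> measurable_fun setT psi ->
  (forall z, 0 <= phi z)%R -> (forall z, phi z <= psi z)%R ->
  \int[mu]_z (kappa y z * phi z)%:E <= \int[mu]_z (kappa y z * psi z)%:E.
Proof.
move=> mphi mpsi p0 ple; apply: ge0_le_integral => //.
- by move=> z _; rewrite lee_fin mulr_ge0.
- by apply/measurable_EFinP; apply: measurable_funM => //; exact: mky.
- by apply/measurable_EFinP; apply: measurable_funM => //; exact: mky.
- by move=> z _; rewrite lee_fin ler_wpM2l.
Qed.

Lemma Ephi_le (phi psi : T -> R) y : measurable_fun setT phi -> measurable_fun setT psi ->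
  (forall z, 0 <= phi z <= 1)%R -> (forall z, 0 <= psi z <= 1)%R ->
  (forall z, phi z <= psi z)%R -> (Ephi phi y <= Ephi psi y)%R.
Proof.
move=> mphi mpsi p01 q01 ple; rewrite /Ephi ler_expR lerD2r.
apply: fine_le; [exact: integrable_fin_num (int_kphi y phi mphi p01)|
                 exact: integrable_fin_num (int_kphi y psi mpsi q01)|].
by apply: int_kphi_le => // z; case/andP: (p01 z).
Qed.

Lemma Ephi1 y : Ephi (fun _ => 1%R) y = 1%R.
Proof.
rewrite /Ephi /lam (_ : \int[mu]_z (kappa y z * 1)%:E = \int[mu]_z (kappa y z)%:E).
  by rewrite subrr expR0.
by apply: eq_integral => z _; rewrite mulr1.
Qed.

Lemma Ephi01 (phi : T -> R) y : measurable_fun setT phi ->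
  (forall z, 0 <= phi z <= 1)%R -> (0 <= Ephi phi y <= 1)%R.
Proof.
move=> mphi p01; rewrite expR_ge0 /=.
rewrite -(Ephi1 y); apply: Ephi_le => //.
- by move=> z; rewrite ler01 lexx.
- by move=> z; case/andP: (p01 z).
Qed.

Fixpoint Qn (n : nat) : T -> R :=
  match n with 0 => fun _ => 0%R | n'.+1 => Ephi (Qn n') end.

Lemma Qn_prop n : measurable_fun setT (Qn n) /\ (forall z, 0 <= Qn n z <= 1)%R.
Proof.
elim: n => [|n [mQ Q01]] /=.
  by split; [exact: measurable_cst|move=> z; rewrite lexx ler01].
split; first by apply: Ephi_meas => // z; case/andP: (Q01 z).
by move=> z; exact: Ephi01.
Qed.

Lemma sum_1 (s : seq T) (h : T -> \bar R) :
  \sum_(z <- s) (1 + h z) = ((size s)%:R)%:E + \sum_(z <- s) h z.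
Proof.
elim: s => [|z s IH]; first by rewrite !big_nil adde0.
rewrite !big_cons IH /= mulrS EFinD.
by rewrite -!addeA; congr (_ + _); rewrite addeCA.
Qed.

Fixpoint Hn (n : nat) : T -> \bar R :=
  match n with 0 => fun _ => 0 | n'.+1 => Jpg (fun _ => 1%R) (fun z => 1 + Hn n' z) end.

Lemma Hn_prop n : measurable_fun setT (Hn n) /\ (forall z, 0 <= Hn n z).
Proof.
elim: n => [|n [mH H0]] /=; first by split; [exact: measurable_cst|by []].
split; last by move=> z; apply: Jpg_ge0 => // w; rewrite ?ler01// adde_ge0.
apply: Jpg_meas.
- exact: measurable_cst.
- by move=> w; exact: ler01.
- by apply: emeasurable_funD => //; exact: measurable_cst.
- by move=> w; rewrite adde_ge0.
Qed.

Lemma pathE_pop n zs (b : \bar R) : 0 <= b ->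
  pathE mu kappa n zs (fun p => b + ((sumn (map size p))%:R)%:E) =
  b + \sum_(z <- zs) Hn n z.
Proof.
elim: n zs b => [|n IH] zs b b0 /=.
  by rewrite big1 ?adde0.
have [mH H0] := Hn_prop n.
rewrite (_ : (fun z1 => pathE mu kappa n z1 _) = (fun z1 => 1%:E *
   (\prod_(z <- z1) 1%R)%:E * (b + \sum_(z <- z1) (1 + Hn n z)))); last first.
  apply/funext => z1.
  transitivity (pathE mu kappa n z1 (fun p => (b + ((size z1)%:R)%:E) + ((sumn (map size p))%:R)%:E)).
    by congr (pathE _ _ _ _ _); apply/funext => p /=; rewrite natrD EFinD addeA.
  by rewrite IH ?adde_ge0// sum_1 big1_eq mul1e mul1e addeA.
rewrite (@offE_M2 zs (fun _ => 1%R) (fun z => 1 + Hn n z) 1%R b) //; last 3 first.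
- by move=> z; rewrite ler01 lexx.
- by apply: emeasurable_funD => //; exact: measurable_cst.
- by move=> w; rewrite adde_ge0.
by rewrite big1 ?mul1e// => y _; exact: Ephi1.
Qed.

Lemma pathE_ext n zs (a1 a2 : R) :
  pathE mu kappa n zs (fun p => if nilp (last zs p) then a1%:E else a2%:E) =
  (a2 + (a1 - a2) * \prod_(z <- zs) Qn n z)%:E.
Proof.
elim: n zs => [|n IH] zs /=.
  case: zs => [|z zs] /=; rewrite ?big_nil ?big_cons /=; congr (_%:E).
    by ring.
  by rewrite mul0r mulr0 addr0.
have [mQ Q01] := Qn_prop n.
rewrite (_ : (fun z1 => pathE mu kappa n z1 _) = (fun z1 =>
   (a2 + (a1 - a2) * \prod_(z <- z1) Qn n z)%:E)); last first.
  by apply/funext => z1; exact: IH.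
by rewrite offE_M1.
Qed.

Fixpoint Un (n : nat) : T -> \bar R :=
  match n with 0 => fun _ => 0 | n'.+1 => Jpg (Qn n') (fun z => 1 + Un n' z) end.

Lemma Un_prop n : measurable_fun setT (Un n) /\ (forall z, 0 <= Un n z).
Proof.
elim: n => [|n [mU U0]] /=; first by split; [exact: measurable_cst|by []].
have [mQ Q01] := Qn_prop n.
have Q0 w : (0 <= Qn n w)%R by case/andP: (Q01 w).
split; last by move=> z; apply: Jpg_ge0 => // w; rewrite adde_ge0.
apply: Jpg_meas => //.
- by apply: emeasurable_funD => //; exact: measurable_cst.
- by move=> w; rewrite adde_ge0.
Qed.

Lemma pathE_hat n zs (b : \bar R) : 0 <= b ->
  pathE mu kappa n zs (fun p => if nilp (last zs p) then b + ((sumn (map size p))%:R)%:E else 0) =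
  (\prod_(z <- zs) Qn n z)%:E * (b + \sum_(z <- zs) Un n z).
Proof.
elim: n zs b => [|n IH] zs b b0 /=.
  case: zs => [|z zs] /=; rewrite ?big_nil ?big_cons /=.
    by rewrite mul1e !adde0.
  by rewrite mul0r mul0e.
have [mU U0] := Un_prop n.
have [mQ Q01] := Qn_prop n.
rewrite (_ : (fun z1 => pathE mu kappa n z1 _) = (fun z1 => 1%:E *
   (\prod_(z <- z1) Qn n z)%:E * (b + \sum_(z <- z1) (1 + Un n z)))); last first.
  apply/funext => z1.
  transitivity (pathE mu kappa n z1 (fun p => if nilp (last z1 p) then
      (b + ((size z1)%:R)%:E) + ((sumn (map size p))%:R)%:E else 0)).
    by congr (pathE _ _ _ _ _); apply/funext => p /=; rewrite natrD EFinD addeA.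
  by rewrite IH ?adde_ge0// sum_1 mul1e addeA.
rewrite (@offE_M2 zs (Qn n) (fun z => 1 + Un n z) 1%R b) //; last 2 first.
- by apply: emeasurable_funD => //; exact: measurable_cst.
- by move=> w; rewrite adde_ge0.
by rewrite mul1e.
Qed.

Lemma Tk_ge0 f y : (forall z, 0 <= f z) -> 0 <= Tk mu kappa f y.
Proof. by move=> f0; apply: integral_ge0 => z _; apply: mule_ge0 => //; rewrite lee_fin. Qed.

Lemma Tk_sum (F : nat -> T -> \bar R) n y : (forall j, measurable_fun setT (F j)) ->
  (forall j z, 0 <= F j z) ->
  Tk mu kappa (fun z => \sum_(0 <= j < n) F j z) y = \sum_(0 <= j < n) Tk mu kappa (F j) y.
Proof.
move=> mF F0; rewrite /Tk.
under eq_integral do rewrite ge0_sume_distrr//.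
rewrite ge0_integral_sum//; first (move=> j; apply: emeasurable_funM => //; exact/measurable_EFinP/mky).
all: try (by move=> j z _; apply: mule_ge0 => //; rewrite lee_fin).
Qed.

Lemma iterT_prop j : measurable_fun setT (iter j (Tk mu kappa) (cst 1)) /\
  (forall z, 0 <= iter j (Tk mu kappa) (cst 1) z).
Proof.
elim: j => [|j [mI I0]] /=; first by split; [exact: measurable_cst|by move=> z; exact: lee01].
by split; [exact: Tk_meas|move=> z; exact: Tk_ge0].
Qed.

Lemma Hn_iter n x : 1 + Hn n x = \sum_(0 <= j < n.+1) iter j (Tk mu kappa) (cst 1) x.
Proof.
elim: n x => [|n IH] x.
  by rewrite big_nat_recl// big_geq// adde0.
rewrite big_nat_recl//.
have -> : Hn n.+1 x = Tk mu kappa (fun z => \sum_(0 <= j < n.+1) iter j (Tk mu kappa) (cst 1) z) x.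
  rewrite /= /Jpg /Tk; apply: eq_integral => z _.
  by rewrite mulr1 IH.
rewrite Tk_sum //.
all: try (by move=> j; case: (iterT_prop j)).
Qed.

Lemma chi_xE x : chi_x mu kappa x = \sum_(0 <= j <oo) iter j (Tk mu kappa) (cst 1) x.
Proof.
rewrite /chi_x.
have -> : (fun n => pathE mu kappa n [:: x] popsize) =
    (fun n => \sum_(0 <= j < n.+1) iter j (Tk mu kappa) (cst 1) x).
  apply/funext => n.
  rewrite (_ : popsize = fun p => 1 + ((sumn (map size p))%:R)%:E); last first.
    by apply/funext => p; rewrite /popsize natrD EFinD.
  by rewrite pathE_pop ?lee01// big_seq1 Hn_iter.
apply: sup_shift; apply: ereal_nondecreasing_series => j _ _.
by case: (iterT_prop j).
Qed.

Lemma chi_avgE : \int[mu]_x chi_x mu kappa x =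
  \sum_(0 <= j <oo) \int[mu]_x (iter j (Tk mu kappa) (cst 1) x).
Proof.
under eq_integral do rewrite chi_xE.
apply: integral_nneseries => //.
all: try (by move=> j; case: (iterT_prop j)).
all: try (by move=> j x _; case: (iterT_prop j)).
Qed.

Lemma Qn_nd n x : (Qn n x <= Qn n.+1 x)%R.
Proof.
elim: n x => [|n IH] x.
  by have [_ Q01] := Qn_prop 1; case/andP: (Q01 x).
have [mQ Q01] := Qn_prop n; have [mQ' Q01'] := Qn_prop n.+1.
exact: Ephi_le.
Qed.

Lemma Qn_ndseq x : nondecreasing_seq (fun n => Qn n x).
Proof. by apply/nondecreasing_seqP => n; exact: Qn_nd. Qed.

Definition qr x := limn (fun n => Qn n x).

Lemma Qn_cvg x : (fun n => Qn n x) @ \oo --> qr x.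
Proof.
apply: nondecreasing_is_cvgn; first exact: Qn_ndseq.
exists 1%R => _ [n _ <-]; have [_ Q01] := Qn_prop n; by case/andP: (Q01 x).
Qed.

Lemma Qn_le_qr n x : (Qn n x <= qr x)%R.
Proof. by apply: nondecreasing_cvgn_le; [exact: Qn_ndseq|exact: Qn_cvg]. Qed.

Lemma qr_le1 x : (qr x <= 1)%R.
Proof.
apply: limr_le; first exact: Qn_cvg.
by apply: nearW => n; have [_ Q01] := Qn_prop n; case/andP: (Q01 x).
Qed.

Lemma qr_gt0 x : (0 < qr x)%R.
Proof. by apply: lt_le_trans (Qn_le_qr 1 x); rewrite /= expR_gt0. Qed.

Lemma qr_meas : measurable_fun setT qr.
Proof.
apply: (measurable_fun_cvg (h := Qn)).
- by move=> m; case: (Qn_prop m).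
- by move=> x _; exact: Qn_cvg.
Qed.

Lemma hatwE x : hatw mu kappa x = (qr x)%:E.
Proof.
rewrite /hatw /rho_x.
have -> : (fun n => pathE mu kappa n [:: x] (fun p => if extinct_by x p then 0 else 1)) =
    (fun n => (1 - Qn n x)%:E).
  apply/funext => n.
  transitivity (pathE mu kappa n [:: x] (fun p => if nilp (last [:: x] p) then (0%R)%:E else (1%R)%:E)).
    by [].
  by rewrite pathE_ext big_seq1; congr (_%:E); ring.
have ni : nonincreasing_seq (fun n => (1 - Qn n x)%:E).
  by apply/nonincreasing_seqP => n; rewrite lee_fin lerB// Qn_nd.
have h1 := ereal_nonincreasing_cvgn ni.
have h2 : (fun n => (1 - Qn n x)%:E) @ \oo --> (1 - qr x)%:E.
  have h : (fun n => 1 - Qn n x)%R @ \oo --> (1 - qr x)%R.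
    by apply: cvgB; [exact: cvg_cst|exact: Qn_cvg].
  rewrite (_ : (fun n => _) = EFin \o (fun n => 1 - Qn n x)%R)//.
  by apply: (cvg_comp _ _ h).
have -> : ereal_inf [set (1 - Qn n x)%:E | n in [set: nat]] = (1 - qr x)%:E.
  by rewrite -(cvg_lim _ h1)// (cvg_lim _ h2).
by rewrite -EFinB; congr (_%:E); ring.
Qed.

Lemma Q0 n z : (0 <= Qn n z)%R.
Proof. by have [_ Q01] := Qn_prop n; case/andP: (Q01 z). Qed.

Lemma U0 n z : 0 <= Un n z.
Proof. by case: (Un_prop n). Qed.

Lemma Un_meas n : measurable_fun setT (Un n).
Proof. by case: (Un_prop n). Qed.

Lemma Qn_meas n : measurable_fun setT (Qn n).
Proof. by case: (Qn_prop n). Qed.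

Lemma UnE n x : Un n.+1 x = Jpg (Qn n) (fun z => 1 + Un n z) x.
Proof. by []. Qed.

Lemma Un_nd n x : Un n x <= Un n.+1 x.
Proof.
elim: n x => [|n IH] x; first exact: U0.
rewrite UnE (UnE n.+1) /Jpg.
apply: ge0_le_integral => //.
- by move=> z _; apply: mule_ge0; [rewrite lee_fin mulr_ge0// Q0|rewrite adde_ge0// U0].
- apply: emeasurable_funM.
    by apply/measurable_EFinP; apply: measurable_funM; [exact: mky|exact: Qn_meas].
  by apply: emeasurable_funD; [exact: measurable_cst|exact: Un_meas].
- apply: emeasurable_funM.
    by apply/measurable_EFinP; apply: measurable_funM; [exact: mky|exact: Qn_meas].
  by apply: emeasurable_funD; [exact: measurable_cst|exact: Un_meas].
- move=> z _; apply: lee_pmul.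
  + by rewrite lee_fin mulr_ge0// Q0.
  + by rewrite adde_ge0// U0.
  + by rewrite lee_fin ler_wpM2l// Qn_nd.
  + by rewrite leeD2l.
Qed.

Definition W n x := (Qn n x)%:E * (1 + Un n x).

Definition V x := limn (fun n => 1 + Un n x).

Lemma Un1_nd x : nondecreasing_seq (fun n => 1 + Un n x).
Proof. by apply/nondecreasing_seqP => n; rewrite leeD2l// Un_nd. Qed.

Lemma V_cvg x : (fun n => 1 + Un n x) @ \oo --> V x.
Proof. exact: ereal_nondecreasing_is_cvgn (Un1_nd x). Qed.

Lemma V_ge0 x : 0 <= V x.
Proof.
apply: lime_ge; first exact: V_cvg.
by apply: nearW => n; rewrite adde_ge0// U0.
Qed.

Lemma V_meas : measurable_fun setT V.
Proof.
apply: (@emeasurable_fun_cvg _ _ _ setT (fun n x => 1 + Un n x)).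
- by move=> m; apply: emeasurable_funD; [exact: measurable_cst|exact: Un_meas].
- by move=> x _; exact: V_cvg.
Qed.

Lemma W_nd x : nondecreasing_seq (fun n => W n x).
Proof.
apply/nondecreasing_seqP => n; apply: lee_pmul.
- by rewrite lee_fin Q0.
- by rewrite adde_ge0// U0.
- by rewrite lee_fin Qn_nd.
- by rewrite leeD2l// Un_nd.
Qed.

Lemma W_cvg x : (fun n => W n x) @ \oo --> (qr x)%:E * V x.
Proof.
apply: cvgeM; last exact: V_cvg.
  have := V_ge0 x; case: (V x) => [v||] //= _.
  by rewrite /mule_def gt_eqF// qr_gt0.
rewrite (_ : (fun n => _) = EFin \o (fun n => Qn n x))//.
by apply: (cvg_comp _ _ (Qn_cvg x)).
Qed.

Lemma W_meas n : measurable_fun setT (W n).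
Proof.
apply: emeasurable_funM; first exact/measurable_EFinP/Qn_meas.
by apply: emeasurable_funD; [exact: measurable_cst|exact: Un_meas].
Qed.

Lemma W_ge0 n z : 0 <= W n z.
Proof. by apply: mule_ge0; [rewrite lee_fin Q0|rewrite adde_ge0// U0]. Qed.

Lemma UnS n x : Un n.+1 x = Tk mu kappa (W n) x.
Proof.
rewrite UnE /Jpg /Tk; apply: eq_integral => z _.
by rewrite EFinM -muleA.
Qed.

Lemma V_fix x : V x = 1 + Tk mu kappa (fun z => (qr z)%:E * V z) x.
Proof.
have h1 : (fun n => 1 + Un n.+1 x) @ \oo --> V x.
  by have := V_cvg x; rewrite -cvg_shiftS.
have h2 : (fun n => 1 + Un n.+1 x) @ \oo --> 1 + Tk mu kappa (fun z => (qr z)%:E * V z) x.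
  suff cv : (fun n => Un n.+1 x) @ \oo --> Tk mu kappa (fun z => (qr z)%:E * V z) x.
    by apply: (cvgeD _ (cvg_cst 1) cv); exact: fin_num_adde_defr.
  under eq_fun do rewrite UnS.
  have -> : Tk mu kappa (fun z => (qr z)%:E * V z) x =
      \int[mu]_z limn (fun n => (kappa x z)%:E * W n z).
    rewrite /Tk; apply: eq_integral => z _; apply/esym/cvg_lim => //.
    by apply: cvgeZl => //; exact: W_cvg.
  apply: cvg_monotone_convergence => //.
  - move=> n; apply: emeasurable_funM; first exact/measurable_EFinP/mky.
    exact: W_meas.
  - by move=> n z _; apply: mule_ge0; [rewrite lee_fin|exact: W_ge0].
  - move=> z _; apply/nondecreasing_seqP => n; apply: lee_wpmul2l; first by rewrite lee_fin.
    exact: W_nd.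
by rewrite -(cvg_lim _ h1)// (cvg_lim _ h2).
Qed.

Lemma hatw_meas : measurable_fun setT (hatw mu kappa).
Proof.
rewrite (_ : hatw mu kappa = EFin \o qr); first exact/measurable_EFinP/qr_meas.
by apply/funext => x; rewrite hatwE.
Qed.

Lemma That_meas f : measurable_fun setT f -> (forall x, 0 <= f x) ->
  measurable_fun setT (That mu kappa f).
Proof.
move=> mf f0; apply: Tk_meas.
- exact: emeasurable_funM mf hatw_meas.
- by move=> x; rewrite hatwE mule_ge0// lee_fin ltW// qr_gt0.
Qed.

Lemma That_ge0 f y : (forall x, 0 <= f x) -> 0 <= That mu kappa f y.
Proof.
move=> f0; apply: Tk_ge0 => x.
by rewrite hatwE mule_ge0// lee_fin ltW// qr_gt0.
Qed.

Lemma iterH_prop j : measurable_fun setT (iter j (That mu kappa) (cst 1)) /\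
  (forall z, 0 <= iter j (That mu kappa) (cst 1) z).
Proof.
elim: j => [|j [mI I0]] /=; first by split; [exact: measurable_cst|by move=> z; exact: lee01].
by split; [exact: That_meas|move=> z; exact: That_ge0].
Qed.

Lemma That_sum (F : nat -> T -> \bar R) n y : (forall j, measurable_fun setT (F j)) ->
  (forall j z, 0 <= F j z) ->
  That mu kappa (fun z => \sum_(0 <= j < n) F j z) y = \sum_(0 <= j < n) That mu kappa (F j) y.
Proof.
move=> mF F0; rewrite /That.
rewrite (_ : (fun y0 => _) = (fun z => \sum_(0 <= j < n) (F j z * hatw mu kappa z))); last first.
  by apply/funext => z; rewrite ge0_sume_distrl.
rewrite Tk_sum//.
- by move=> j; exact: emeasurable_funM (mF j) hatw_meas.
- by move=> j z; rewrite hatwE mule_ge0// lee_fin ltW// qr_gt0.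
Qed.

Definition Sh n x := \sum_(0 <= j < n) iter j (That mu kappa) (cst 1) x.

Lemma ShS n x : Sh n.+1 x = 1 + That mu kappa (Sh n) x.
Proof.
rewrite /Sh big_nat_recl// That_sum//.
- by move=> j; case: (iterH_prop j).
- by move=> j; case: (iterH_prop j).
Qed.

Lemma Sh_meas n : measurable_fun setT (Sh n).
Proof.
apply: emeasurable_sum => j; by case: (iterH_prop j).
Qed.

Lemma Sh_ge0 n x : 0 <= Sh n x.
Proof. by apply: sume_ge0 => j _; case: (iterH_prop j). Qed.

Lemma Sh_le_V m x : Sh m x <= V x.
Proof.
elim: m x => [|m IH] x; first by rewrite /Sh big_geq// V_ge0.
rewrite ShS V_fix leeD2l// /That /Tk.
apply: ge0_le_integral => //.
- move=> z _; apply: mule_ge0; first by rewrite lee_fin.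
  by rewrite hatwE mule_ge0// ?Sh_ge0// lee_fin ltW// qr_gt0.
- apply: emeasurable_funM; first exact/measurable_EFinP/mky.
  exact: emeasurable_funM (Sh_meas m) hatw_meas.
- apply: emeasurable_funM; first exact/measurable_EFinP/mky.
  by apply: emeasurable_funM; [exact/measurable_EFinP/qr_meas|exact: V_meas].
- move=> z _; apply: lee_wpmul2l; first by rewrite lee_fin.
  rewrite hatwE muleC; apply: lee_wpmul2l => //.
  by rewrite lee_fin ltW// qr_gt0.
Qed.

Lemma Un_le_Sh n x : 1 + Un n x <= Sh n.+1 x.
Proof.
elim: n x => [|n IH] x.
  by rewrite /Sh big_nat_recl// big_geq.
rewrite ShS leeD2l// UnS /That /Tk.
apply: ge0_le_integral => //.
- by move=> z _; apply: mule_ge0; [rewrite lee_fin|exact: W_ge0].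
- apply: emeasurable_funM; first exact/measurable_EFinP/mky.
  exact: W_meas.
- apply: emeasurable_funM; first exact/measurable_EFinP/mky.
  exact: emeasurable_funM (Sh_meas n.+1) hatw_meas.
- move=> z _; apply: lee_wpmul2l; first by rewrite lee_fin.
  rewrite hatwE /W muleC; apply: lee_pmul => //.
  + by rewrite adde_ge0// U0.
  + by rewrite lee_fin Q0.
  + by rewrite lee_fin Qn_le_qr.
Qed.

Lemma V_series x : V x = \sum_(0 <= j <oo) iter j (That mu kappa) (cst 1) x.
Proof.
have nd : nondecreasing_seq (fun n => Sh n x).
  apply: ereal_nondecreasing_series => j _ _; by case: (iterH_prop j).
have cv : (fun n => Sh n x) @ \oo --> limn (fun n => Sh n x).
  exact: ereal_nondecreasing_is_cvgn.
apply/le_anti/andP; split.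
  have cvS : (fun n => Sh n.+1 x) @ \oo --> limn (fun n => Sh n x).
    by have := cv; rewrite -cvg_shiftS.
  rewrite -(cvg_lim _ cvS)//.
  apply: lee_lim; [exact: V_cvg|exact: (cvgP _ cvS)|].
  by apply: nearW => n; exact: Un_le_Sh.
apply: lime_le; first exact: cv.
by apply: nearW => n; exact: Sh_le_V.
Qed.

Lemma chihat_xE x : chihat_x mu kappa x =
  hatw mu kappa x * \sum_(0 <= j <oo) iter j (That mu kappa) (cst 1) x.
Proof.
rewrite /chihat_x hatwE -V_series.
have -> : (fun n => pathE mu kappa n [:: x]
      (fun p => if extinct_by x p then popsize p else 0)) = (fun n => W n x).
  apply/funext => n.
  transitivity (pathE mu kappa n [:: x] (fun p => if nilp (last [:: x] p)
       then 1 + ((sumn (map size p))%:R)%:E else 0)).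
    congr (pathE _ _ _ _ _); apply/funext => p.
    by rewrite /extinct_by /popsize natrD EFinD.
  by rewrite pathE_hat ?lee01// !big_seq1.
have h := ereal_nondecreasing_cvgn (W_nd x).
by rewrite -(cvg_lim _ h)// (cvg_lim _ (W_cvg x)).
Qed.

Lemma chihat_avgE : \int[mu]_x chihat_x mu kappa x =
  \sum_(0 <= j <oo) wint mu (hatw mu kappa) (iter j (That mu kappa) (cst 1)).
Proof.
transitivity (\int[mu]_x \sum_(0 <= j <oo) ((qr x)%:E * iter j (That mu kappa) (cst 1) x)).
  apply: eq_integral => x _; rewrite chihat_xE hatwE nneseriesZl//.
  by move=> j _; case: (iterH_prop j).
rewrite integral_nneseries//.
- rewrite /wint; congr (limn _); apply/funext => n; apply: eq_bigr => j _.
  by apply: eq_integral => x _; rewrite hatwE.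
- move=> j; apply: emeasurable_funM; first exact/measurable_EFinP/qr_meas.
  by case: (iterH_prop j).
- move=> j x _; apply: mule_ge0; first by rewrite lee_fin ltW// qr_gt0.
  by case: (iterH_prop j).
Qed.

Lemma main_sec :
  (forall x, chi_x mu kappa x
             = \sum_(0 <= j <oo) iter j (Tk mu kappa) (cst 1) x) /\
  (chi_avg mu kappa
     = ((fine (mu setT))^-1)%:E *
       \sum_(0 <= j <oo) wint mu (cst 1) (iter j (Tk mu kappa) (cst 1)) /\
   chi_avg mu kappa
     = ((fine (mu setT))^-1)%:E *
       \sum_(0 <= j <oo) wip mu (cst 1) (iter j (Tk mu kappa) (cst 1)) (cst 1)) /\
  (forall x, chihat_x mu kappa x
             = hatw mu kappa x *
               \sum_(0 <= j <oo) iter j (That mu kappa) (cst 1) x) /\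
  (chihat_avg mu kappa
     = ((fine (mu setT))^-1)%:E *
       \sum_(0 <= j <oo) wint mu (hatw mu kappa) (iter j (That mu kappa) (cst 1)) /\
   chihat_avg mu kappa
     = ((fine (mu setT))^-1)%:E *
       \sum_(0 <= j <oo)
          wip mu (hatw mu kappa) (iter j (That mu kappa) (cst 1)) (cst 1)).
Proof.
split; first exact: chi_xE.
split.
  rewrite /chi_avg chi_avgE /wint /wip; split; congr (_ * _);
    congr (limn _); apply/funext => n; apply: eq_bigr => j _;
    by apply: eq_integral => x _; rewrite /= ?mule1 mul1e.
split; first exact: chihat_xE.
rewrite /chihat_avg chihat_avgE; split => //.
congr (_ * _); congr (limn _); apply/funext => n; apply: eq_bigr => j _.
by rewrite /wint /wip; apply: eq_integral => x _; rewrite /= mule1.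
Qed.
End proof.

Theorem lemma3p1 (d : measure_display) (T : measurableType d) (R : realType)
  (mu : {measure set T -> \bar R}) (kappa : T -> T -> R) :
  0 < mu setT < +oo ->
  (forall x y, (0 <= kappa x y)%R) ->
  (forall x y, kappa x y = kappa y x) ->
  measurable_fun setT (fun p : T * T => kappa p.1 p.2) ->
  (forall x, \int[mu]_y (kappa x y)%:E < +oo) ->
  \int[mu \x mu]_p (kappa p.1 p.2)%:E < +oo ->
  (forall x, chi_x mu kappa x
             = \sum_(0 <= j <oo) iter j (Tk mu kappa) (cst 1) x) /\
  (chi_avg mu kappa
     = ((fine (mu setT))^-1)%:E *
       \sum_(0 <= j <oo) wint mu (cst 1) (iter j (Tk mu kappa) (cst 1)) /\
   chi_avg mu kappa
     = ((fine (mu setT))^-1)%:E *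
       \sum_(0 <= j <oo) wip mu (cst 1) (iter j (Tk mu kappa) (cst 1)) (cst 1)) /\
  (forall x, chihat_x mu kappa x
             = hatw mu kappa x *
               \sum_(0 <= j <oo) iter j (That mu kappa) (cst 1) x) /\
  (chihat_avg mu kappa
     = ((fine (mu setT))^-1)%:E *
       \sum_(0 <= j <oo) wint mu (hatw mu kappa) (iter j (That mu kappa) (cst 1)) /\
   chihat_avg mu kappa
     = ((fine (mu setT))^-1)%:E *
       \sum_(0 <= j <oo)
          wip mu (hatw mu kappa) (iter j (That mu kappa) (cst 1)) (cst 1)).
Proof.
move=> /andP[_ muT] k0 _ mk kint _.
exact: (@main_sec d T R mu kappa muT k0 mk kint).
Qed.
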